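(* Let $\alpha(\lambda)=\prod_{k=1}^R(\lambda-\alpha_k)$ be a monic polynomial of degree $R$. Then the separate states associated with $\alpha$ satisfy $$\langle\alpha|=(-1)^{RN}\langle1|\prod_{k=1}^RD(\alpha_k),\qquad |\alpha\rangle=(-1)^{RN}\prod_{k=1}^RD(\alpha_k)|1\rangle,$$ where $\langle1|$ and $|1\rangle$ are the separate states associated with the constant function $1$.
   Context: Fix $N\ge1$, nonzero $\eta\in\mathbb C$ and $\xi_1,\dots,\xi_N\in\mathbb C$ with $\xi_a\neq\xi_b$, $\xi_a\ne\xi_b\pm\eta$ for $a\ne b$. Let $\mathbb V=\bigotimes_{n=1}^NV_n$, $V_n\cong\mathbb C^2$. Let $R(\lambda)$ be the $4\times4$ matrix with rows $(\lambda+\eta,0,0,0),(0,\lambda,\eta,0),(0,\eta,\lambda,0),(0,0,0,\lambda+\eta)$ and $T_0(\lambda)=R_{0N}(\lambda-\xi_N)\cdots R_{01}(\lambda-\xi_1)$ on $V_0\otimes\mathbb V$, written in the auxiliary space $V_0\cong\mathbb C^2$ as the $2\times2$ matrix with entries $A(\lambda),B(\lambda)$ (first row), $C(\lambda),D(\lambda)$ (second row). Put $a(\lambda)=\prod_n(\lambda-\xi_n+\eta)$, $d(\lambda)=\prod_n(\lambda-\xi_n)$. Let $|0\rangle=\bigotimes_n(1,0)^T$ and $\langle0|=\bigotimes_n(1,0)$. For complex numbers $x_1,\dots,x_M$ let $V(x_1,\dots,x_M)=\prod_{1\le b<a\le M}(x_a-x_b)$ and $V(\{\xi\})=V(\xi_1,\dots,\xi_N)$.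 For $\mathbf h\in\{0,1\}^N$ put $|\mathbf h\rangle=V(\{\xi\})^{-1}\prod_n(B(\xi_n)/a(\xi_n))^{h_n}|0\rangle$ and $\langle\mathbf h|=V(\{\xi\})^{-1}\langle0|\prod_n(C(\xi_n)/d(\xi_n-\eta))^{h_n}$. For functions $\alpha,\beta$ on $\mathbb C$ the separate states are $\langle\alpha|=\sum_{\mathbf h\in\{0,1\}^N}\prod_{a=1}^N\alpha(\xi_a-h_a\eta)\,V(\xi_1-h_1\eta,\dots,\xi_N-h_N\eta)\langle\mathbf h|$ and $|\beta\rangle=\sum_{\mathbf h}\prod_{a=1}^N\beta(\xi_a-h_a\eta)\,V(\xi_1+h_1\eta,\dots,\xi_N+h_N\eta)|\mathbf h\rangle$. *)

(* Defs.v *)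
From mathcomp Require Import all_boot all_algebra.
From mathcomp Require Export complex reals.
Import GRing.Theory.
Set Implicit Arguments. Unset Strict Implicit. Unset Printing Implicit Defensive.
Local Open Scope ring_scope.

(* Basis of C^2: index 0 <-> (1,0)^T, index 1 <-> (0,1)^T.
   Basis of V = (C^2)^{(x) N}: finite functions s : 'I_N -> 'I_2
   (site n, 0-based, corresponds to V_{n+1} of the paper). *)
Definition i0 : 'I_2 := @Ordinal 2 0 isT.
Definition i1 : 'I_2 := @Ordinal 2 1 isT.

Section XXZ.
Variable C : fieldType.

Definition idx (N : nat) := {ffun 'I_N -> 'I_2}.

Definition op N := idx N -> idx N -> C.
Definition opmul N (X Y : op N) : op N :=
  fun s t => \sum_(u : idx N) X s u * Y u t.
Definition opid N : op N := fun s t => (s == t)%:R.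
Definition opscale N (c : C) (X : op N) : op N := fun s t => c * X s t.
Definition opprod N (l : seq (op N)) : op N := foldr (@opmul N) (@opid N) l.
Definition opapp N (X : op N) (v : idx N -> C) : idx N -> C :=
  fun s => \sum_(t : idx N) X s t * v t.
Definition braapp N (w : idx N -> C) (X : op N) : idx N -> C :=
  fun t => \sum_(s : idx N) w s * X s t.

(* The 4x4 R-matrix, rows/columns indexed by 2a+b for e_a (x) e_b *)
Definition Rmat (eta lam : C) (i j : nat) : C :=
  match i, j with
  | 0, 0 => lam + eta | 0, 1 => 0   | 0, 2 => 0   | 0, 3 => 0
  | 1, 0 => 0   | 1, 1 => lam | 1, 2 => eta | 1, 3 => 0
  | 2, 0 => 0   | 2, 1 => eta | 2, 2 => lam | 2, 3 => 0
  | 3, 0 => 0   | 3, 1 => 0   | 3, 2 => 0   | 3, 3 => lam + eta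
  | _, _ => 0
  end.

(* operators on V_0 (x) V, written as 2x2 matrices (in the auxiliary space)
   of operators on V *)
Definition amat N := 'I_2 -> 'I_2 -> op N.
Definition amul N (X Y : amat N) : amat N :=
  fun a c s t => \sum_(b < 2) opmul (X a b) (Y b c) s t.
Definition aid N : amat N := fun a c => if a == c then @opid N else (fun _ _ => 0).

Definition R0n (eta : C) N (n : 'I_N) (mu : C) : amat N :=
  fun a a' s t =>
    Rmat eta mu (2 * a + s n)%N (2 * a' + t n)%N *
    \prod_(m : 'I_N | m != n) (s m == t m)%:R.

Variables (N : nat) (eta : C) (xi : 'I_N -> C).

(* T_0(lambda) = R_{0N}(lambda - xi_N) ... R_{01}(lambda - xi_1) *)
Definition monodromy (lam : C) : amat N :=
  foldr (@amul N) (@aid N) [seq R0n eta n (lam - xi n) | n <- rev (enum 'I_N)].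

Definition Aop lam := monodromy lam i0 i0.
Definition Bop lam := monodromy lam i0 i1.
Definition Cop lam := monodromy lam i1 i0.
Definition Dop lam := monodromy lam i1 i1.

Definition afun (lam : C) : C := \prod_(n : 'I_N) (lam - xi n + eta).
Definition dfun (lam : C) : C := \prod_(n : 'I_N) (lam - xi n).

Definition ket0 : idx N -> C := fun s => (s == [ffun => i0])%:R.
Definition bra0 : idx N -> C := fun s => (s == [ffun => i0])%:R.

Definition Vand (xs : seq C) : C :=
  \prod_(a < size xs) \prod_(b < size xs | (b < a)%N) (xs`_a - xs`_b).

Definition Vxi : C := Vand [seq xi n | n <- enum 'I_N].

(* |h> and <h| for h in {0,1}^N (h_n = 1 <-> h n = true) *)
Definition keth (h : {ffun 'I_N -> bool}) : idx N -> C :=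
  fun s => (Vxi)^-1 *
    opapp (opprod [seq if h n then opscale (afun (xi n))^-1 (Bop (xi n))
                       else @opid N | n <- enum 'I_N]) ket0 s.
Definition brah (h : {ffun 'I_N -> bool}) : idx N -> C :=
  fun s => (Vxi)^-1 *
    braapp bra0 (opprod [seq if h n then opscale (dfun (xi n - eta))^-1 (Cop (xi n))
                       else @opid N | n <- enum 'I_N]) s.

Definition bra_sep (alpha : C -> C) : idx N -> C :=
  fun s => \sum_(h : {ffun 'I_N -> bool})
    (\prod_(a : 'I_N) alpha (xi a - (h a)%:R * eta)) *
    Vand [seq xi a - (h a)%:R * eta | a <- enum 'I_N] * brah h s.
Definition ket_sep (beta : C -> C) : idx N -> C :=
  fun s => \sum_(h : {ffun 'I_N -> bool})
    (\prod_(a : 'I_N) beta (xi a - (h a)%:R * eta)) *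
    Vand [seq xi a + (h a)%:R * eta | a <- enum 'I_N] * keth h s.

End XXZ.

(* Main.v *)
Require Import Defs.
From mathcomp Require Import all_boot all_algebra.
From mathcomp Require Import complex reals.
From mathcomp Require Import ring.
From Stdlib Require Import FunctionalExtensionality.
Import GRing.Theory Num.Theory.
Set Implicit Arguments. Unset Strict Implicit. Unset Printing Implicit Defensive.
Local Open Scope ring_scope.
Section G.
Variable C : numFieldType.
Variable eta : C.
Variable m : nat.
Local Notation A := 'M[C]_m.
Definition famT := C -> 'I_2 -> 'I_2 -> A.
Definition RTT (T : famT) := forall l u a b c d,
  (l - u) *: (T l a c *m T u b d) + eta *: (T l b c *m T u a d)
  = (l - u) *: (T u b d *m T l a c) + eta *: (T u b c *m T l a d).
Definition mulT (X Y : famT) : famT := fun l a c => \sum_(e < 2) X l a e *m Y l e c.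
Definition commT (X Y : famT) := forall l u a b c d, X l a b *m Y u c d = Y u c d *m X l a b.

Lemma prodXY X Y l u a c b d : commT X Y ->
  mulT X Y l a c *m mulT X Y u b d =
  \sum_(e < 2) \sum_(f < 2) (X l a e *m X u b f) *m (Y l e c *m Y u f d).
Proof.
move=> cXY; rewrite /mulT mulmx_suml; apply: eq_bigr => e _.
rewrite mulmx_sumr; apply: eq_bigr => f _.
by rewrite !mulmxA -(mulmxA (X l a e)) -cXY !mulmxA.
Qed.

Lemma RTT_mul X Y : RTT X -> RTT Y -> commT X Y -> RTT (mulT X Y).
Proof.
move=> RX RY cXY l u a b c d.
rewrite !prodXY //.
transitivity (\sum_(e < 2) \sum_(f < 2)
   (((l - u) *: (X u b f *m X l a e) + eta *: (X u b e *m X l a f)) *m (Y l e c *m Y u f d))).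
  rewrite !scaler_sumr -big_split; apply: eq_bigr => e _.
  rewrite !scaler_sumr -big_split; apply: eq_bigr => f _.
  by rewrite -RX mulmxDl -!scalemxAl.
symmetry.
transitivity (\sum_(f < 2) \sum_(e < 2)
   ((X u b f *m X l a e) *m ((l - u) *: (Y l e c *m Y u f d) + eta *: (Y l f c *m Y u e d)))).
  rewrite !scaler_sumr -big_split; apply: eq_bigr => f _.
  rewrite !scaler_sumr -big_split; apply: eq_bigr => e _.
  by rewrite RY mulmxDr -!scalemxAr.
transitivity (\sum_(f < 2) \sum_(e < 2)
   ((l - u) *: ((X u b f *m X l a e) *m (Y l e c *m Y u f d)) +
    eta *: ((X u b f *m X l a e) *m (Y l f c *m Y u e d)))).
  by apply: eq_bigr => f _; apply: eq_bigr => e _; rewrite mulmxDr !scalemxAr.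
symmetry.
transitivity (\sum_(e < 2) \sum_(f < 2)
   ((l - u) *: ((X u b f *m X l a e) *m (Y l e c *m Y u f d)) +
    eta *: ((X u b e *m X l a f) *m (Y l e c *m Y u f d)))).
  by apply: eq_bigr => e _; apply: eq_bigr => f _; rewrite mulmxDl !scalemxAl.
under eq_bigr do rewrite big_split.
under [RHS]eq_bigr do rewrite big_split.
rewrite !big_split /=; congr (_ + _).
by rewrite exchange_big.
Qed.
End G.

Lemma I2P (k : 'I_2) : k = i0 \/ k = i1.
Proof. case: k => [[|[|m]] H] //; [left|right]; exact: val_inj. Qed.

Lemma sum2 (C : zmodType) (F : 'I_2 -> C) : \sum_(k < 2) F k = F i0 + F i1.
Proof. rewrite big_ord_recl big_ord_recl big_ord0 addr0; congr (F _ + F _); exact: val_inj. Qed.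

Section S.
Variable C : numFieldType.
Variable N : nat.
Local Notation I := (idx N).
Definition nI := #|I|.
Local Notation A := 'M[C]_nI.
Definition toM (X : op C N) : A := \matrix_(i, j) X (enum_val i) (enum_val j).
Lemma sum_idx (F : I -> C) : \sum_(u : I) F u = \sum_(k < nI) F (enum_val k).
Proof. by rewrite /nI (big_enum_val F). Qed.
Lemma toM_mul X Y : toM (opmul X Y) = toM X *m toM Y.
Proof. apply/matrixP=> i j; rewrite !mxE /opmul sum_idx; apply: eq_bigr => k _; by rewrite !mxE. Qed.
Lemma toM_ext (X Y : op C N) : (forall s t, X s t = Y s t) -> toM X = toM Y.
Proof. by move=> H; apply/matrixP=> i j; rewrite !mxE H. Qed.
Lemma toM_id : toM (@opid C N) = 1%:M.
Proof. apply/matrixP=> i j; rewrite !mxE /opid (inj_eq enum_val_inj). done. Qed.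
Lemma toM_scale c X : toM (opscale c X) = c *: toM X.
Proof. by apply/matrixP=> i j; rewrite !mxE. Qed.
Lemma toM_add (X Y : op C N) : toM (fun s t => X s t + Y s t) = toM X + toM Y.
Proof. by apply/matrixP=> i j; rewrite !mxE. Qed.
Lemma toM_zero : toM (fun _ _ => 0) = 0.
Proof. by apply/matrixP=> i j; rewrite !mxE. Qed.
Lemma toM_prod l : toM (opprod l) = foldr (@mulmx C _ _ _) 1%:M (map toM l).
Proof. elim: l => [|X l IH] /=; first exact: toM_id. by rewrite toM_mul IH. Qed.
Lemma toME X s t : toM X (enum_rank s) (enum_rank t) = X s t.
Proof. by rewrite mxE !enum_rankK. Qed.

Definition upd (s : I) (n : 'I_N) (k : 'I_2) : I := [ffun m => if m == n then k else s m].
Lemma upd_n s n k : upd s n k n = k. Proof. by rewrite ffunE eqxx. Qed.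
Lemma upd_upd s n k j : upd (upd s n k) n j = upd s n j.
Proof. by apply/ffunP=> m; rewrite !ffunE; case: eqP. Qed.
Lemma upd_comm s n m k j : n != m -> upd (upd s n k) m j = upd (upd s m j) n k.
Proof. move=> nm; apply/ffunP=> p; rewrite !ffunE; case: (eqVneq p m) => [->|//]; by rewrite eq_sym (negbTE nm). Qed.

Lemma sum_collapse (F : I -> C) s n :
  \sum_(t : I) F t * (t == upd s n (t n))%:R = \sum_(k < 2) F (upd s n k).
Proof.
rewrite (partition_big (fun t : I => t n) predT) //=; apply: eq_bigr => k _.
rewrite (bigD1 (upd s n k)) /= ?upd_n ?eqxx // mulr1 big1 ?addr0 //.
move=> t /andP[/eqP tn ne]; by rewrite tn (negbTE ne) mulr0.
Qed.

Definition loc n (M : 'M[C]_2) : op C N := fun s t => M (s n) (t n) * (t == upd s n (t n))%:R.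

Lemma opmul_loc n M X s t : opmul (loc n M) X s t = \sum_(k < 2) M (s n) k * X (upd s n k) t.
Proof.
transitivity (\sum_(k < 2) (fun u : I => M (s n) (u n) * X u t) (upd s n k)).
  rewrite -(sum_collapse (fun u : I => M (s n) (u n) * X u t)) /opmul /loc; by apply: eq_bigr => u _; rewrite mulrAC.
by apply: eq_bigr => k _; rewrite /= upd_n.
Qed.

Lemma sum2_collapse (g : 'I_2 -> C) (U : 'I_2 -> I) n t : (forall k, U k n = k) ->
  \sum_(k < 2) g k * (t == U k)%:R = g (t n) * (t == U (t n))%:R.
Proof.
move=> HU; rewrite sum2.
have ne k : t n != k -> (t == U k) = false.
  by move=> h; apply/eqP => E; rewrite E HU eqxx in h.
case: (I2P (t n)) => tn; rewrite tn.
- by rewrite (ne i1) ?tn // mulr0 addr0.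
- by rewrite (ne i0) ?tn // mulr0 add0r.
Qed.

Lemma loc_mul n M M' s t : opmul (loc n M) (loc n M') s t = loc n (M *m M') s t.
Proof.
rewrite opmul_loc /loc mxE mulr_suml; apply: eq_bigr => k _.
by rewrite upd_n upd_upd mulrA.
Qed.

Lemma upd_other s n k m : m != n -> upd s n k m = s m.
Proof. by move=> h; rewrite ffunE (negbTE h). Qed.

Lemma loc_comm_aux n m M M' s t : n != m ->
  opmul (loc n M) (loc m M') s t =
  M (s n) (t n) * M' (s m) (t m) * (t == upd (upd s n (t n)) m (t m))%:R.
Proof.
move=> nm; have mn : m != n by rewrite eq_sym.
rewrite opmul_loc /loc.
transitivity (\sum_(k < 2) (M (s n) k * M' (s m) (t m)) * (t == upd (upd s n k) m (t m))%:R).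
  apply: eq_bigr => k _; by rewrite (upd_other _ _ mn) mulrA.
rewrite (@sum2_collapse (fun k => M (s n) k * M' (s m) (t m)) (fun k => upd (upd s n k) m (t m)) n t) //.
by move=> k; rewrite (upd_other _ _ nm) upd_n.
Qed.

Lemma loc_comm n m M M' s t : n != m ->
  opmul (loc n M) (loc m M') s t = opmul (loc m M') (loc n M) s t.
Proof.
move=> nm; have mn : m != n by rewrite eq_sym.
by rewrite (loc_comm_aux _ _ _ _ nm) (loc_comm_aux _ _ _ _ mn) (upd_comm _ _ _ nm) (mulrC (M' _ _)).
Qed.

Lemma loc_add n M M' s t : loc n (M + M') s t = loc n M s t + loc n M' s t.
Proof. by rewrite /loc mxE mulrDl. Qed.
Lemma loc_scale n c M s t : loc n (c *: M) s t = opscale c (loc n M) s t.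
Proof. by rewrite /loc /opscale mxE mulrA. Qed.
Lemma upd_self s n : upd s n (s n) = s.
Proof. by apply/ffunP=> m; rewrite ffunE; case: eqP => [->|]. Qed.
Lemma loc_one n s t : loc n 1%:M s t = @opid C N s t.
Proof.
rewrite /loc /opid mxE; case: (eqVneq s t) => [->|st]; first by rewrite upd_self !eqxx mulr1.
case: (eqVneq (s n) (t n)) => [e|]; last by rewrite mul0r.
by rewrite -e upd_self eq_sym (negbTE st) mulr0.
Qed.

Lemma prod_delta (n : 'I_N) (s t : I) :
  \prod_(m | m != n) ((s m == t m)%:R : C) = (t == upd s n (t n))%:R.
Proof.
case: (eqVneq t (upd s n (t n))) => E.
  rewrite big1 // => m mn; have -> : t m = s m by rewrite {1}E upd_other.
  by rewrite eqxx.
apply/eqP/prodf_eq0.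
case/boolP: [exists m, (m != n) && (s m != t m)].
  by case/existsP=> m /andP[mn st]; exists m => //; rewrite (negbTE st).
rewrite negb_exists => /forallP H; case/eqP: E; apply/ffunP=> m.
rewrite ffunE; case: eqP => [->//|/eqP mn].
by move: (H m); rewrite mn /= negbK => /eqP.
Qed.

Definition rr (eta mu : C) (a b : 'I_2) : 'M[C]_2 :=
  \matrix_(i, j) Rmat eta mu (2 * a + i) (2 * b + j).

Lemma R0n_loc eta n mu a b s t : R0n eta n mu a b s t = loc n (rr eta mu a b) s t.
Proof. by rewrite /R0n /loc mxE prod_delta. Qed.
End S.

Lemma rtt_loc (C : numFieldType) (eta u v : C) a b c d :
  (u - v) *: (rr eta u a c *m rr eta v b d) + eta *: (rr eta u b c *m rr eta v a d)
  = (u - v) *: (rr eta v b d *m rr eta u a c) + eta *: (rr eta v b c *m rr eta u a d).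
Proof.
apply/matrixP => i j; rewrite !mxE !sum2 !mxE.
by case: (I2P a) => ->; case: (I2P b) => ->; case: (I2P c) => ->; case: (I2P d) => ->;
  case: (I2P i) => ->; case: (I2P j) => -> /=; ring.
Qed.

Section PF.
Variable C : numFieldType.
Definition pf (f : C -> C) := exists p : {poly C}, forall x, f x = p.[x].
Lemma pf_const c : pf (fun _ => c).
Proof. by exists c%:P => x; rewrite hornerC. Qed.
Lemma pf_add f g : pf f -> pf g -> pf (fun x => f x + g x).
Proof. by move=> [p hp] [q hq]; exists (p + q) => x; rewrite hornerD hp hq. Qed.
Lemma pf_mul f g : pf f -> pf g -> pf (fun x => f x * g x).
Proof. by move=> [p hp] [q hq]; exists (p * q) => x; rewrite hornerM hp hq. Qed.
Lemma pf_ext f g : (forall x, f x = g x) -> pf f -> pf g.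
Proof. by move=> E [p hp]; exists p => x; rewrite -E. Qed.
Lemma pf_sum (I : Type) (r : seq I) (F : I -> C -> C) :
  (forall i, pf (F i)) -> pf (fun x => \sum_(i <- r) F i x).
Proof.
move=> h; elim: r => [|i r IH].
  by apply: (pf_ext _ (pf_const 0)) => x; rewrite big_nil.
by apply: (pf_ext _ (pf_add (h i) IH)) => x; rewrite big_cons.
Qed.
Lemma pf_sub f g : pf f -> pf g -> pf (fun x => f x - g x).
Proof. by move=> [p hp] [q hq]; exists (p - q) => x; rewrite hornerD hornerN hp hq. Qed.
Lemma pf_prod (I : Type) (r : seq I) (P : pred I) (F : I -> C -> C) :
  (forall i, pf (F i)) -> pf (fun x => \prod_(i <- r | P i) F i x).
Proof.
move=> h; elim: r => [|i r IH].
  by apply: (pf_ext _ (pf_const 1)) => x; rewrite big_nil.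
case: (boolP (P i)) => Pi.
  by apply: (pf_ext _ (pf_mul (h i) IH)) => x; rewrite big_cons Pi.
by apply: (pf_ext _ IH) => x; rewrite big_cons (negbTE Pi).
Qed.
Lemma pf_lin a b : pf (fun x => a * x + b).
Proof. by exists (a *: 'X + b%:P) => x; rewrite hornerD hornerZ hornerX hornerC. Qed.

Lemma pf_zero f x0 : pf f -> (forall x, x != x0 -> f x = 0) -> forall x, f x = 0.
Proof.
move=> [p hp] H.
have p0 : p = 0.
  apply/eqP; apply/negPn/negP => pn0.
  pose rs := [seq x0 + (k.+1)%:R | k <- iota 0 (size p)].
  have := @max_poly_roots _ p rs pn0; rewrite /rs size_map size_iota ltnn => Hm.
  suff : false by []; apply: Hm.
    apply/allP => y /mapP[k _ ->]; rewrite /root -hp H //.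
    by rewrite -subr_eq0 addrC addKr pnatr_eq0.
  rewrite map_inj_uniq ?iota_uniq // => a b /addrI /eqP.
  by rewrite eqr_nat => /eqP [].
by move=> x; rewrite hp p0 horner0.
Qed.
End PF.

Section M.
Variable C : numFieldType.
Variable N : nat.
Variable eta : C.
Variable xi : 'I_N -> C.
Local Notation I := (idx N).
Local Notation A := 'M[C]_(nI N).

Definition rho n (M : 'M[C]_2) : A := toM (loc n M).
Lemma rho_mul n M M' : rho n (M *m M') = rho n M *m rho n M'.
Proof. by rewrite /rho -toM_mul; apply: toM_ext => s t; rewrite loc_mul. Qed.
Lemma rho_add n M M' : rho n (M + M') = rho n M + rho n M'.
Proof. by rewrite /rho -toM_add; apply: toM_ext => s t; rewrite loc_add. Qed.
Lemma rho_scale n c M : rho n (c *: M) = c *: rho n M.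
Proof. by rewrite /rho -toM_scale; apply: toM_ext => s t; rewrite loc_scale. Qed.
Lemma rho_comm n m M M' : n != m -> rho n M *m rho m M' = rho m M' *m rho n M.
Proof. by move=> nm; rewrite /rho -!toM_mul; apply: toM_ext => s t; rewrite loc_comm. Qed.
Lemma rho_zero n : rho n 0 = 0.
Proof. by rewrite -(scale0r 0) rho_scale scale0r. Qed.

Definition cm n (Z : A) := forall M, rho n M *m Z = Z *m rho n M.
Lemma cm_add n Z Z' : cm n Z -> cm n Z' -> cm n (Z + Z').
Proof. by move=> h h' M; rewrite mulmxDr mulmxDl h h'. Qed.
Lemma cm_mul n Z Z' : cm n Z -> cm n Z' -> cm n (Z *m Z').
Proof. by move=> h h' M; rewrite mulmxA h -mulmxA h' mulmxA. Qed.
Lemma cm_scale n c Z : cm n Z -> cm n (c *: Z).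
Proof. by move=> h M; rewrite -scalemxAr h scalemxAl. Qed.
Lemma cm_scalar n c : cm n (c%:M).
Proof. by move=> M; rewrite scalar_mxC. Qed.
Lemma cm_sum2 n (F : 'I_2 -> A) : (forall k, cm n (F k)) -> cm n (\sum_(k < 2) F k).
Proof. by move=> h; rewrite sum2; apply: cm_add. Qed.
Lemma cm_rho n m M : m != n -> cm n (rho m M).
Proof. by move=> mn M'; rewrite rho_comm // eq_sym. Qed.

Definition Tf (s : seq 'I_N) (l : C) (a c : 'I_2) : A :=
  toM (foldr (@amul C N) (@aid C N) [seq R0n eta n (l - xi n) | n <- s] a c).
Definition Lf n (l : C) (a c : 'I_2) : A := rho n (rr eta (l - xi n) a c).

Lemma toM_sum2 (F : 'I_2 -> op C N) :
  toM (fun s t => \sum_(k < 2) F k s t) = \sum_(k < 2) toM (F k).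
Proof. rewrite sum2 -toM_add; apply: toM_ext => s t; by rewrite sum2. Qed.

Lemma Tf_cons n s l a c : Tf (n :: s) l a c = \sum_(b < 2) Lf n l a b *m Tf s l b c.
Proof.
rewrite /Tf /= /amul toM_sum2; apply: eq_bigr => b _.
rewrite -toM_mul /Lf /rho; apply: toM_ext => u v.
rewrite /opmul; apply: eq_bigr => w _; by rewrite R0n_loc.
Qed.
Lemma Tf_nil l a c : Tf [::] l a c = ((a == c)%:R)%:M.
Proof.
rewrite /Tf /= /aid; case: eqP => _; first exact: toM_id.
by rewrite toM_zero raddf0.
Qed.


Lemma RTT_ext (T1 T2 : famT C (nI N)) : (forall l a c, T1 l a c = T2 l a c) -> RTT eta T1 -> RTT eta T2.
Proof. by move=> E R l u a b c d; rewrite -!E R. Qed.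

Lemma RTT_L n : RTT eta (Lf n).
Proof.
move=> l u a b c d; have := rtt_loc eta (l - xi n) (u - xi n) a b c d.
move/(congr1 (rho n)); rewrite !rho_add !rho_scale !rho_mul.
have -> : l - xi n - (u - xi n) = l - u by ring.
by [].
Qed.

Lemma RTT_nil : RTT eta (Tf [::]).
Proof.
move=> l u a b c d; rewrite !Tf_nil -!scalar_mxM; congr (_ *: _ + _).
by rewrite mulrC.
Qed.

Lemma cm_Tf n s l a c : n \notin s -> cm n (Tf s l a c).
Proof.
elim: s a c => [|m s IH] a c; first by rewrite Tf_nil => _; apply: cm_scalar.
rewrite in_cons negb_or => /andP[nm ns]; rewrite Tf_cons.
apply: cm_sum2 => b; apply: cm_mul; last exact: IH.
by apply: cm_rho; rewrite eq_sym.
Qed.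

Lemma RTT_Tf s : uniq s -> RTT eta (Tf s).
Proof.
elim: s => [|n s IH] /=; first by move=> _; exact: RTT_nil.
case/andP=> ns us.
apply: (@RTT_ext (mulT (Lf n) (Tf s))); first by move=> l a c; rewrite Tf_cons.
apply: RTT_mul; [exact: RTT_L | exact: IH | ].
move=> l u a b c d; rewrite /Lf; exact: (cm_Tf u c d ns (rr eta (l - xi n) a b)).
Qed.

Definition E00 : 'M[C]_2 := \matrix_(i, j) ((i == i0) && (j == i0))%:R.
Definition Pn n : A := rho n E00.
Definition Q (s : seq 'I_N) : A := foldr (@mulmx C _ _ _) 1%:M (map Pn s).

Lemma cm_Q n s : n \notin s -> cm n (Q s).
Proof.
elim: s => [|m s IH] /=; first by move=> _; exact: cm_scalar.
rewrite in_cons negb_or => /andP[nm ns]; apply: cm_mul; last exact: IH.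
by apply: cm_rho; rewrite eq_sym.
Qed.

Lemma loc_eq (M M' : 'M[C]_2) : M = M' -> forall n, rho n M = rho n M'.
Proof. by move=> ->. Qed.

Lemma L10P n l : Lf n l i1 i0 *m Pn n = 0.
Proof.
rewrite /Lf /Pn -rho_mul -(rho_zero n); apply: loc_eq.
apply/matrixP => i j; rewrite !mxE sum2 !mxE.
by case: (I2P i) => ->; case: (I2P j) => -> /=; ring.
Qed.
Lemma L11P n l : Lf n l i1 i1 *m Pn n = (l - xi n) *: Pn n.
Proof.
rewrite /Lf /Pn -rho_mul -rho_scale; apply: loc_eq.
apply/matrixP => i j; rewrite !mxE sum2 !mxE.
by case: (I2P i) => ->; case: (I2P j) => -> /=; ring.
Qed.
Lemma PL01 n l : Pn n *m Lf n l i0 i1 = 0.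
Proof.
rewrite /Lf /Pn -rho_mul -(rho_zero n); apply: loc_eq.
apply/matrixP => i j; rewrite !mxE sum2 !mxE.
by case: (I2P i) => ->; case: (I2P j) => -> /=; ring.
Qed.
Lemma PL11 n l : Pn n *m Lf n l i1 i1 = (l - xi n) *: Pn n.
Proof.
rewrite /Lf /Pn -rho_mul -rho_scale; apply: loc_eq.
apply/matrixP => i j; rewrite !mxE sum2 !mxE.
by case: (I2P i) => ->; case: (I2P j) => -> /=; ring.
Qed.

Lemma vacuum s l : uniq s ->
  [/\ Tf s l i1 i0 *m Q s = 0,
      Tf s l i1 i1 *m Q s = (\prod_(m <- s) (l - xi m)) *: Q s,
      Q s *m Tf s l i0 i1 = 0 &
      Q s *m Tf s l i1 i1 = (\prod_(m <- s) (l - xi m)) *: Q s].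
Proof.
elim: s => [|n s IH] /=.
  move=> _; rewrite !Tf_nil big_nil scale1r /= /Q /= mulmx1 mul1mx.
  by split; rewrite ?mulmx1 // raddf0.
case/andP=> ns us; case: (IH us) => [V1 V2 V3 V4].
have cT : forall a c, Tf s l a c *m Pn n = Pn n *m Tf s l a c.
  by move=> a c; rewrite /Pn (cm_Tf l a c ns E00).
have cQ : forall a b, Lf n l a b *m Q s = Q s *m Lf n l a b.
  by move=> a b; rewrite /Lf (cm_Q ns).
rewrite /Q /= -/(Q s) !Tf_cons !sum2 big_cons.
split.
- rewrite mulmxDl !mulmxA -(mulmxA _ (Tf s l i0 i0)) cT mulmxA L10P !mul0mx add0r.
  by rewrite -(mulmxA _ (Tf s l i1 i0)) cT -!mulmxA V1 !mulmx0.
- rewrite mulmxDl !mulmxA -(mulmxA _ (Tf s l i0 i1)) cT mulmxA L10P !mul0mx add0r.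
  rewrite -(mulmxA _ (Tf s l i1 i1)) cT mulmxA L11P -!mulmxA V2.
  by rewrite -scalemxAr -scalemxAl scalerA mulrC.
- rewrite mulmxDr !mulmxA -(mulmxA (Pn n) (Q s)) -cQ mulmxA -(mulmxA _ (Q s)) V3 mulmx0 add0r.
  by rewrite -(mulmxA (Pn n) (Q s)) -cQ mulmxA PL01 !mul0mx.
- rewrite mulmxDr !mulmxA -(mulmxA (Pn n) (Q s)) -cQ mulmxA -(mulmxA _ (Q s)) V3 mulmx0 add0r.
  rewrite -(mulmxA (Pn n) (Q s)) -cQ mulmxA PL11 -mulmxA V4.
  by rewrite -scalemxAr -scalemxAl scalerA mulrC.
Qed.

Lemma pf_Rmat p q x : pf (fun l => Rmat eta (l - x) p q).
Proof.
have L1 : pf (fun l => l - x + eta).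
  by apply: (pf_ext _ (pf_lin 1 (eta - x))) => l; rewrite mul1r addrA addrAC.
have L2 : pf (fun l => l - x).
  by apply: (pf_ext _ (pf_lin 1 (- x))) => l; rewrite mul1r.
have L3 := pf_const eta; have L4 := pf_const (0 : C).
by do 5 (case: p => [|p]; rewrite /=; [do 5 (case: q => [|q]; rewrite /=; try exact L1; try exact L2; try exact L3; try exact L4) |]);
  do 4 (case: q => [|q]; rewrite /=; try exact L4).
Qed.

Lemma pf_Tf s a c i j : pf (fun l => Tf s l a c i j).
Proof.
elim: s a c i j => [|n s IH] a c i j.
  by apply: (pf_ext _ (pf_const (Tf [::] 0 a c i j))) => l; rewrite !Tf_nil.
apply: (pf_ext (f := fun l => \sum_(b < 2) \sum_(k < nI N) Lf n l a b i k * Tf s l b c k j)).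
  by move=> l; rewrite Tf_cons summxE; apply: eq_bigr => b _; rewrite mxE.
apply: pf_sum => b; apply: pf_sum => k; apply: pf_mul; last exact: IH.
apply: (pf_ext (f := fun l => Rmat eta (l - xi n) (2 * a + enum_val i n) (2 * b + enum_val k n) *
   ((enum_val k == upd (enum_val i) n (enum_val k n))%:R))).
  by move=> l; rewrite /Lf /rho /toM /loc !mxE.
by apply: pf_mul; [exact: pf_Rmat | exact: pf_const].
Qed.

Definition z0 : I := [ffun => i0].
Definition Pf : A := toM (fun s t => (s == z0)%:R * (t == z0)%:R).

Lemma sum_delta (F : I -> C) x : \sum_(u : I) (u == x)%:R * F u = F x.
Proof.
rewrite (bigD1 x) //= eqxx mul1r big1 ?addr0 // => u /negbTE ->; by rewrite mul0r.
Qed.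

Lemma i10 : (i1 == i0) = false. Proof. by []. Qed.

Lemma upd_z (s : I) (n : 'I_N) : (s n == i0) && (upd s n i0 == z0) = (s == z0).
Proof.
case: (eqVneq (s n) i0) => [e|ne] /=.
  by rewrite -e upd_self.
by apply/esym/eqP => E; move: ne; rewrite E ffunE eqxx.
Qed.

Lemma Pn_Pf n : Pn n *m Pf = Pf.
Proof.
rewrite /Pn /rho /Pf -toM_mul; apply: toM_ext => s t.
rewrite opmul_loc sum2 /E00 !mxE eqxx i10 !andbF !andbT mul0r addr0 mulrA -natrM mulnb.
by rewrite -natrM mulnb upd_z -natrM mulnb.
Qed.

Lemma Pf_Pn n : Pf *m Pn n = Pf.
Proof.
rewrite /Pn /rho /Pf -toM_mul; apply: toM_ext => s t.
rewrite /opmul.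
under eq_bigr do rewrite mulrAC mulrC.
rewrite sum_delta /loc /E00 mxE ffunE eqxx /=.
congr (_ * _); rewrite -natrM mulnb.
suff -> : (t n == i0) && (t == upd z0 n (t n)) = (t == z0) by [].
case: (eqVneq (t n) i0) => [e|ne] /=.
  rewrite e; have -> : upd z0 n i0 = z0 by apply/ffunP => m; rewrite !ffunE; case: eqP.
  done.
by apply/esym/eqP => E; move: ne; rewrite E ffunE eqxx.
Qed.

Lemma Q_Pf s : Q s *m Pf = Pf.
Proof. elim: s => [|n s IH] /=; first by rewrite /Q mul1mx. by rewrite /Q /= -/(Q s) -mulmxA IH Pn_Pf. Qed.
Lemma Pf_Q s : Pf *m Q s = Pf.
Proof. elim: s => [|n s IH] /=; first by rewrite /Q mulmx1. by rewrite /Q /= -/(Q s) mulmxA Pf_Pn IH. Qed.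

Definition sN := rev (enum 'I_N).
Lemma uniq_sN : uniq sN. Proof. by rewrite rev_uniq enum_uniq. Qed.
Definition DM l := Tf sN l i1 i1.
Definition BM l := Tf sN l i0 i1.
Definition CM l := Tf sN l i1 i0.

Lemma prod_sN l : \prod_(m <- sN) (l - xi m) = dfun xi l.
Proof. by rewrite /sN big_rev big_enum. Qed.

Lemma D_Pf l : DM l *m Pf = dfun xi l *: Pf.
Proof.
case: (vacuum l uniq_sN) => _ V2 _ _.
by rewrite /DM -(Q_Pf sN) mulmxA V2 prod_sN -scalemxAl Q_Pf.
Qed.
Lemma Pf_D l : Pf *m DM l = dfun xi l *: Pf.
Proof.
case: (vacuum l uniq_sN) => _ _ _ V4.
by rewrite /DM -(Pf_Q sN) -mulmxA V4 prod_sN -scalemxAr Pf_Q.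
Qed.

Lemma mx_cont (F : C -> A) x : (forall i j, pf (fun l => F l i j)) ->
  (forall l, l != x -> F l = 0) -> forall l, F l = 0.
Proof.
move=> P H l; apply/matrixP => i j; rewrite mxE.
by apply: (@pf_zero _ _ x (P i j)) => y ny; rewrite H // mxE.
Qed.

Lemma scale_cancel (a : C) (X Y : A) : a != 0 -> a *: X = a *: Y -> X = Y.
Proof. by move=> a0 /(congr1 (fun M => a^-1 *: M)); rewrite !scalerA mulVf // !scale1r. Qed.

Lemma pf_DM_mul (V : A) i j : pf (fun l => (DM l *m V) i j).
Proof.
apply: (pf_ext (f := fun l => \sum_(k <- index_enum 'I_(nI N)) DM l i k * V k j)).
  by move=> l; rewrite mxE.
by apply: pf_sum => k; apply: pf_mul; [exact: pf_Tf | exact: pf_const].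
Qed.
Lemma pf_mul_DM (V : A) i j : pf (fun l => (V *m DM l) i j).
Proof.
apply: (pf_ext (f := fun l => \sum_(k <- index_enum 'I_(nI N)) V i k * DM l k j)).
  by move=> l; rewrite mxE.
by apply: pf_sum => k; apply: pf_mul; [exact: pf_const | exact: pf_Tf].
Qed.

Lemma exch_ket (v : A) (dv d' : C -> C) n :
  (forall l, DM l *m v = dv l *: v) -> dv (xi n) = 0 -> pf d' ->
  (forall l, dv l * (l - xi n + eta) = (l - xi n) * d' l) ->
  forall l, DM l *m (BM (xi n) *m v) = d' l *: (BM (xi n) *m v).
Proof.
move=> Hv H0 Pd Hrel.
have R := RTT_Tf uniq_sN.
suff: forall l, DM l *m (BM (xi n) *m v) - d' l *: (BM (xi n) *m v) = 0.
  by move=> H l; apply/eqP; rewrite -subr_eq0 H.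
apply: (mx_cont (x := xi n)).
  move=> i j; apply: (pf_ext (f := fun l => (DM l *m (BM (xi n) *m v)) i j - d' l * (BM (xi n) *m v) i j)).
    by move=> l; rewrite !mxE.
  by apply: pf_sub; [exact: pf_DM_mul | apply: pf_mul; [exact: Pd | exact: pf_const]].
move=> l nl; apply/eqP; rewrite subr_eq0; apply/eqP.
apply: (@scale_cancel (l - xi n)); first by rewrite subr_eq0.
have := congr1 (fun M => M *m v) (R l (xi n) i1 i0 i1 i1).
rewrite !mulmxDl -!scalemxAl -!mulmxA -/(DM l) -/(BM l) -/(BM (xi n)) -/(DM (xi n)).
rewrite Hv H0 scale0r mulmx0 scaler0 addr0 (Hv l) -!scalemxAr => ->.
rewrite -scalerDl scalerA scalerA -Hrel mulrC; congr (_ *: _); ring.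
Qed.

Lemma exch_bra (v : A) (dv d' : C -> C) n :
  (forall l, v *m DM l = dv l *: v) -> dv (xi n) = 0 -> pf d' ->
  (forall l, dv l * (l - xi n + eta) = (l - xi n) * d' l) ->
  forall l, (v *m CM (xi n)) *m DM l = d' l *: (v *m CM (xi n)).
Proof.
move=> Hv H0 Pd Hrel.
have R := RTT_Tf uniq_sN.
suff: forall l, (v *m CM (xi n)) *m DM l - d' l *: (v *m CM (xi n)) = 0.
  by move=> H l; apply/eqP; rewrite -subr_eq0 H.
apply: (mx_cont (x := xi n)).
  move=> i j; apply: (pf_ext (f := fun l => ((v *m CM (xi n)) *m DM l) i j - d' l * (v *m CM (xi n)) i j)).
    by move=> l; rewrite !mxE.
  by apply: pf_sub; [exact: pf_mul_DM | apply: pf_mul; [exact: Pd | exact: pf_const]].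
move=> l nl; apply/eqP; rewrite subr_eq0; apply/eqP.
apply: (@scale_cancel (l - xi n)); first by rewrite subr_eq0.
have := congr1 (fun M => v *m M) (R l (xi n) i1 i1 i1 i0).
rewrite !mulmxDr -!scalemxAr !mulmxA -/(DM l) -/(CM l) -/(CM (xi n)) -/(DM (xi n)).
rewrite !Hv H0 scale0r mul0mx scaler0 addr0 -!scalemxAl => <-.
rewrite -scalerDl scalerA scalerA -Hrel mulrC; congr (_ *: _); ring.
Qed.

Definition dS (s : seq 'I_N) (h : 'I_N -> bool) (l : C) :=
  \prod_(m : 'I_N) (l - xi m + ((m \in s) && h m)%:R * eta).

Lemma pf_dS s (h : 'I_N -> bool) : pf (dS s h).
Proof.
apply: pf_prod => m; apply: (pf_ext _ (pf_lin 1 (- xi m + ((m \in s) && h m)%:R * eta))).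
by move=> l; rewrite mul1r addrA.
Qed.
Lemma dS_nil (h : 'I_N -> bool) l : dS [::] h l = dfun xi l.
Proof. by apply: eq_bigr => m _; rewrite in_nil /= mul0r addr0. Qed.
Lemma dS_zero s (h : 'I_N -> bool) n : n \notin s -> dS s h (xi n) = 0.
Proof.
move=> ns; apply/eqP/prodf_eq0; exists n => //.
by rewrite (negbTE ns) /= mul0r addr0 subrr.
Qed.
Lemma dS_rel s (h : 'I_N -> bool) n l : n \notin s -> h n ->
  dS s h l * (l - xi n + eta) = (l - xi n) * dS (n :: s) h l.
Proof.
move=> ns hn; rewrite /dS (bigD1 n) //= [in RHS](bigD1 n) //= in_cons eqxx hn (negbTE ns) /=.
rewrite mul0r addr0 mul1r mulrAC -mulrA; congr (_ * (_ * _)); apply: eq_bigr => m mn.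
by rewrite in_cons (negbTE mn).
Qed.
Lemma dS_false s (h : 'I_N -> bool) n l : ~~ h n -> dS (n :: s) h l = dS s h l.
Proof.
move=> hn; apply: eq_bigr => m _; rewrite in_cons.
by case: (eqVneq m n) => [->|] //=; rewrite (negbTE hn) andbF.
Qed.
Lemma dS_rcons s (h : 'I_N -> bool) n l : dS (rcons s n) h l = dS (n :: s) h l.
Proof. by apply: eq_bigr => m _; rewrite mem_rcons. Qed.

Definition gK (h : 'I_N -> bool) (c : 'I_N -> C) n : A := if h n then c n *: BM (xi n) else 1%:M.
Definition Kv h c s := foldr (@mulmx C _ _ _) 1%:M (map (gK h c) s) *m Pf.

Lemma Kv_eig h c s : uniq s -> forall l, DM l *m Kv h c s = dS s h l *: Kv h c s.
Proof.
elim: s => [|n s IH] /=.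
  by move=> _ l; rewrite /Kv /= mul1mx D_Pf dS_nil.
case/andP=> ns us; have IHs := IH us.
have -> : Kv h c (n :: s) = gK h c n *m Kv h c s by rewrite /Kv /= mulmxA.
rewrite /gK; case: (boolP (h n)) => hn; last first.
  by move=> l; rewrite !mul1mx IHs dS_false.
move=> l; rewrite -!scalemxAl -scalemxAr scalerA mulrC -scalerA; congr (_ *: _).
apply: (exch_ket (dv := dS s h)) => //.
- exact: dS_zero.
- exact: pf_dS.
- by move=> l'; apply: dS_rel.
Qed.

Definition gC (h : 'I_N -> bool) (c : 'I_N -> C) n : A := if h n then c n *: CM (xi n) else 1%:M.
Definition Wv h c s := Pf *m foldr (@mulmx C _ _ _) 1%:M (map (gC h c) s).

Lemma foldr_rcons (l : seq A) x : foldr (@mulmx C _ _ _) 1%:M (rcons l x) = foldr (@mulmx C _ _ _) 1%:M l *m x.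
Proof. elim: l => [|y l IH] /=; first by rewrite mulmx1 mul1mx. by rewrite IH mulmxA. Qed.

Lemma Wv_eig h c s : uniq s -> forall l, Wv h c s *m DM l = dS s h l *: Wv h c s.
Proof.
elim/last_ind: s => [|s n IH].
  by move=> _ l; rewrite /Wv /= mulmx1 Pf_D dS_nil.
rewrite rcons_uniq => /andP[ns us]; have IHs := IH us.
have -> : Wv h c (rcons s n) = Wv h c s *m gC h c n by rewrite /Wv map_rcons foldr_rcons mulmxA.
rewrite /gC; case: (boolP (h n)) => hn; last first.
  by move=> l; rewrite !mulmx1 IHs dS_rcons dS_false.
move=> l; rewrite dS_rcons -!scalemxAr -scalemxAl scalerA mulrC -scalerA; congr (_ *: _).
apply: (exch_bra (dv := dS s h)) => //.
- exact: dS_zero.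
- exact: pf_dS.
- by move=> l'; apply: dS_rel.
Qed.

Lemma sum_toM (X : op C N) (K : A) s j :
  \sum_(t : I) X s t * K (enum_rank t) j = (toM X *m K) (enum_rank s) j.
Proof.
rewrite mxE sum_idx; apply: eq_bigr => k _; by rewrite enum_valK /toM mxE enum_rankK.
Qed.
Lemma sum_toM' (X : op C N) (K : A) i t :
  \sum_(s : I) K i (enum_rank s) * X s t = (K *m toM X) i (enum_rank t).
Proof.
rewrite mxE sum_idx; apply: eq_bigr => k _; by rewrite enum_valK /toM mxE enum_rankK.
Qed.

Lemma toM_B l : toM (Bop eta xi l) = BM l. Proof. by []. Qed.
Lemma toM_C l : toM (Cop eta xi l) = CM l. Proof. by []. Qed.
Lemma toM_D l : toM (Dop eta xi l) = DM l. Proof. by []. Qed.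

Definition cK n := (afun eta xi (xi n))^-1.
Definition cC n := (dfun xi (xi n - eta))^-1.

Lemma Pf_E s t : Pf (enum_rank s) (enum_rank t) = (s == z0)%:R * (t == z0)%:R.
Proof. by rewrite /Pf toME. Qed.

Lemma keth_K (h : {ffun 'I_N -> bool}) s :
  keth eta xi h s = (Vxi xi)^-1 * Kv h cK (enum 'I_N) (enum_rank s) (enum_rank z0).
Proof.
rewrite /keth; congr (_ * _); rewrite /Kv /opapp.
have -> : foldr (@mulmx C _ _ _) 1%:M (map (gK h cK) (enum 'I_N)) =
  toM (opprod [seq (if h n then opscale (afun eta xi (xi n))^-1 (Bop eta xi (xi n)) else opid C (N:=N)) | n <- enum 'I_N]).
  rewrite toM_prod -map_comp; congr (foldr _ _ _); apply: eq_map => n /=.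
  by rewrite /gK; case: (h n); rewrite ?toM_scale ?toM_id.
rewrite -sum_toM; apply: eq_bigr => t _; by rewrite Pf_E eqxx mulr1.
Qed.

Lemma brah_W (h : {ffun 'I_N -> bool}) t :
  brah eta xi h t = (Vxi xi)^-1 * Wv h cC (enum 'I_N) (enum_rank z0) (enum_rank t).
Proof.
rewrite /brah; congr (_ * _); rewrite /Wv /braapp.
have -> : foldr (@mulmx C _ _ _) 1%:M (map (gC h cC) (enum 'I_N)) =
  toM (opprod [seq (if h n then opscale (dfun xi (xi n - eta))^-1 (Cop eta xi (xi n)) else opid C (N:=N)) | n <- enum 'I_N]).
  rewrite toM_prod -map_comp; congr (foldr _ _ _); apply: eq_map => n /=.
  by rewrite /gC; case: (h n); rewrite ?toM_scale ?toM_id.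
rewrite -sum_toM'; apply: eq_bigr => s _; by rewrite Pf_E eqxx mul1r mulrC.
Qed.

Lemma keth_eig (h : {ffun 'I_N -> bool}) l s :
  opapp (Dop eta xi l) (keth eta xi h) s = dS (enum 'I_N) h l * keth eta xi h s.
Proof.
rewrite /opapp; under eq_bigr do rewrite keth_K mulrCA.
rewrite -mulr_sumr sum_toM toM_D Kv_eig ?enum_uniq // mxE keth_K.
by rewrite mulrCA.
Qed.
Lemma brah_eig (h : {ffun 'I_N -> bool}) l t :
  braapp (brah eta xi h) (Dop eta xi l) t = dS (enum 'I_N) h l * brah eta xi h t.
Proof.
rewrite /braapp; under eq_bigr do rewrite brah_W -mulrA.
rewrite -mulr_sumr sum_toM' toM_D Wv_eig ?enum_uniq // mxE brah_W.
by rewrite mulrCA.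
Qed.

Lemma opapp_id (v : I -> C) s : opapp (opid C (N:=N)) v s = v s.
Proof.
rewrite /opapp (bigD1 s) //= /opid eqxx mul1r big1 ?addr0 // => t ts.
by rewrite eq_sym (negbTE ts) mul0r.
Qed.
Lemma braapp_id (v : I -> C) t : braapp v (opid C (N:=N)) t = v t.
Proof.
rewrite /braapp (bigD1 t) //= /opid eqxx mulr1 big1 ?addr0 // => s st.
by rewrite /opid (negbTE st) mulr0.
Qed.
Lemma opapp_mul (X Y : op C N) v s : opapp (opmul X Y) v s = opapp X (opapp Y v) s.
Proof.
rewrite /opapp /opmul; under eq_bigr do rewrite mulr_suml.
rewrite exchange_big /=; apply: eq_bigr => u _; rewrite mulr_sumr.
by apply: eq_bigr => t _; rewrite mulrA.
Qed.
Lemma braapp_mul (X Y : op C N) w t : braapp w (opmul X Y) t = braapp (braapp w X) Y t.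
Proof.
rewrite /braapp /opmul; under eq_bigr do rewrite mulr_sumr.
rewrite exchange_big /=; apply: eq_bigr => u _; rewrite mulr_suml.
by apply: eq_bigr => s _; rewrite mulrA.
Qed.
Lemma opapp_ext (X : op C N) v v' s : (forall t, v t = v' t) -> opapp X v s = opapp X v' s.
Proof. by move=> E; apply: eq_bigr => t _; rewrite E. Qed.
Lemma braapp_ext (X : op C N) v v' t : (forall s, v s = v' s) -> braapp v X t = braapp v' X t.
Proof. by move=> E; apply: eq_bigr => s _; rewrite E. Qed.
Lemma opapp_scale (X : op C N) c v s : opapp X (fun t => c * v t) s = c * opapp X v s.
Proof. by rewrite /opapp mulr_sumr; apply: eq_bigr => t _; rewrite mulrCA. Qed.
Lemma braapp_scale (X : op C N) c v t : braapp (fun s => c * v s) X t = c * braapp v X t.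
Proof. by rewrite /braapp mulr_sumr; apply: eq_bigr => s _; rewrite mulrA. Qed.

Lemma opapp_prod_eig (v : I -> C) (e : C -> C) (l : seq C) :
  (forall a s, opapp (Dop eta xi a) v s = e a * v s) ->
  forall s, opapp (opprod (map (Dop eta xi) l)) v s = (\prod_(a <- l) e a) * v s.
Proof.
move=> H; elim: l => [|a l IH] s /=; first by rewrite big_nil mul1r opapp_id.
rewrite opapp_mul (opapp_ext _ _ IH) opapp_scale H big_cons.
by rewrite mulrCA mulrA.
Qed.
Lemma braapp_prod_eig (v : I -> C) (e : C -> C) (l : seq C) :
  (forall a t, braapp v (Dop eta xi a) t = e a * v t) ->
  forall t, braapp v (opprod (map (Dop eta xi) l)) t = (\prod_(a <- l) e a) * v t.
Proof.
move=> H; elim: l v H => [|a l IH] v H t /=; first by rewrite big_nil mul1r braapp_id.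
rewrite braapp_mul.
rewrite (braapp_ext _ _ (H a)).
rewrite (IH (fun s => e a * v s)).
  by rewrite big_cons mulrCA mulrA.
by move=> b s; rewrite braapp_scale H mulrCA.
Qed.
End M.

Section F.
Variable C : numFieldType.
Variable N : nat.
Variable eta : C.
Variable xi : 'I_N -> C.
Variable Rd : nat.
Variable alphas : 'I_Rd -> C.
Local Notation I := (idx N).

Lemma sign2 n : ((-1) ^+ n * (-1) ^+ n : C) = 1.
Proof. by rewrite -exprMn mulrNN mulr1 expr1n. Qed.

Lemma coefE (h : {ffun 'I_N -> bool}) :
  \prod_(a : 'I_N) (\prod_(k < Rd) ((xi a - (h a)%:R * eta) - alphas k)) =
  (-1) ^+ (Rd * N) * \prod_(a <- map alphas (enum 'I_Rd)) dS eta xi (enum 'I_N) h a.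
Proof.
rewrite big_map big_enum /=.
have E k : dS eta xi (enum 'I_N) h (alphas k) =
    (-1) ^+ N * \prod_(a : 'I_N) ((xi a - (h a)%:R * eta) - alphas k).
  rewrite -[X in (-1) ^+ X](card_ord N) -prodrN /dS; apply: eq_bigr => m _; rewrite mem_enum /=.
  ring.
rewrite (eq_bigr _ (fun k _ => E k)) big_split /= prodr_const card_ord.
rewrite -exprM mulnC mulrA sign2 mul1r exchange_big //.
Qed.


Lemma Dprod_map : opprod [seq Dop eta xi (alphas k) | k <- enum 'I_Rd] =
  opprod (map (Dop eta xi) (map alphas (enum 'I_Rd))).
Proof. by rewrite -(map_comp (Dop eta xi) alphas). Qed.

Lemma braapp_sum (F : {ffun 'I_N -> bool} -> I -> C) X t :
  braapp (fun s => \sum_h F h s) X t = \sum_h braapp (F h) X t.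
Proof.
rewrite /braapp; under eq_bigr => s _ do rewrite mulr_suml.
by rewrite exchange_big.
Qed.
Lemma opapp_sum (F : {ffun 'I_N -> bool} -> I -> C) X t :
  opapp X (fun s => \sum_h F h s) t = \sum_h opapp X (F h) t.
Proof.
rewrite /opapp; under eq_bigr => s _ do rewrite mulr_sumr.
by rewrite exchange_big.
Qed.

Lemma bra_main :
  bra_sep eta xi (fun lam => \prod_(k < Rd) (lam - alphas k))
  = (fun s => (-1) ^+ (Rd * N) * braapp (bra_sep eta xi (fun _ => 1))
        (opprod [seq Dop eta xi (alphas k) | k <- enum 'I_Rd]) s).
Proof.
apply: functional_extensionality => t.
rewrite /bra_sep braapp_sum mulr_sumr; apply: eq_bigr => h _.
rewrite big1_eq.
under [in RHS]braapp_ext do rewrite mul1r.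

rewrite braapp_scale Dprod_map (braapp_prod_eig (e := fun a => dS eta xi (enum 'I_N) h a)).
  by rewrite coefE; ring.
by move=> a t'; rewrite brah_eig.
Qed.

Lemma ket_main :
  ket_sep eta xi (fun lam => \prod_(k < Rd) (lam - alphas k))
  = (fun s => (-1) ^+ (Rd * N) * opapp
        (opprod [seq Dop eta xi (alphas k) | k <- enum 'I_Rd]) (ket_sep eta xi (fun _ => 1)) s).
Proof.
apply: functional_extensionality => t.
rewrite /ket_sep opapp_sum mulr_sumr; apply: eq_bigr => h _.
rewrite big1_eq.
under [in RHS]opapp_ext do rewrite mul1r.
rewrite opapp_scale Dprod_map (opapp_prod_eig (e := fun a => dS eta xi (enum 'I_N) h a)).
  by rewrite coefE; ring.
by move=> a t'; rewrite keth_eig.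
Qed.
End F.

Unset Implicit Arguments.

Theorem proposition1 (R : realType) (N : nat) (eta : R[i]) (xi : 'I_N -> R[i])
    (Rdeg : nat) (alphas : 'I_Rdeg -> R[i]) :
  (0 < N)%N ->
  eta != 0 ->
  (forall a b : 'I_N, a != b ->
     [/\ xi a != xi b, xi a != xi b + eta & xi a != xi b - eta]) ->
  let alpha := fun lam : R[i] => \prod_(k < Rdeg) (lam - alphas k) in
  let Dprod := opprod [seq Dop eta xi (alphas k) | k <- enum 'I_Rdeg] in
  bra_sep eta xi alpha
    = (fun s => (-1) ^+ (Rdeg * N) * braapp (bra_sep eta xi (fun _ => 1)) Dprod s)
  /\
  ket_sep eta xi alpha
    = (fun s => (-1) ^+ (Rdeg * N) * opapp Dprod (ket_sep eta xi (fun _ => 1)) s).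
Proof.
move=> _ _ _ alpha Dprod; split; [exact: bra_main | exact: ket_main].
Qed.
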